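(* Assume nondegeneracy. Then $\mathcal{B}^*$ has at most $M!$ extreme points.
   Context: Let $M\ge1$. Let $X_1,\dots,X_M,S$ be random variables on finite alphabets with joint pmf $p(x_1,\dots,x_M,s)$, and for each $1\le k\le M$ let $q_k(z_k|x_k)$ be a fixed conditional pmf on a finite alphabet $\mathcal Z_k$, so that $(X_1,\dots,X_M,S,Z_1,\dots,Z_M)$ has joint pmf $p(x_1,\dots,x_M,s)\prod_{k=1}^M q_k(z_k|x_k)$. For $A\subseteq\{1,\dots,M\}$ write $X_A=(X_i)_{i\in A}$, $Z_A=(Z_i)_{i\in A}$ ($Z_\emptyset$ is a constant), and $I^c=\{1,\dots,M\}\setminus I$. Define $\mathcal{B}^*$ as the set of $(R_1,\dots,R_M)\in\mathbb{R}^M$ with $I(X_I;Z_I\mid Z_{I^c},S)\le\sum_{i\in I}R_i$ for every nonempty $I\subseteq\{1,\dots,M\}$. Nondegeneracy means: for all disjoint nonempty $I,I'\subseteq\{1,\dots,M\}$, $I(Z_I;Z_{I'}\mid Z_{(I\cup I')^c},S)>0$. *)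

(* Defs.v *)
From Stdlib Require Import Reals.
From mathcomp Require Import all_boot.
Set Implicit Arguments.
Unset Strict Implicit.
Unset Printing Implicit Defensive.

Local Open Scope R_scope.

Definition rsum (T : finType) (P : pred T) (F : T -> R) : R :=
  \big[Rplus/0]_(t : T | P t) F t.

Definition dist (Om T : finType) (P : Om -> R) (f : Om -> T) (t : T) : R :=
  rsum (fun w => f w == t) P.

(* Shannon entropy (natural log; convention 0 ln 0 = 0, since ln 0 = 0 in Stdlib) *)
Definition entropy (Om T : finType) (P : Om -> R) (f : Om -> T) : R :=
  - rsum predT (fun t => dist P f t * ln (dist P f t)).

Definition cmi (Om TA TB TC : finType) (P : Om -> R)
  (A : Om -> TA) (B : Om -> TB) (C : Om -> TC) : R :=
  entropy P (fun w => (A w, C w)) + entropy P (fun w => (B w, C w))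
  - entropy P (fun w => (A w, B w, C w)) - entropy P C.

Section Model.
Variables (M : nat) (X : 'I_M -> finType) (S : finType) (Z : 'I_M -> finType).

Definition Omega : finType :=
  ({dffun forall i : 'I_M, X i} * S * {dffun forall i : 'I_M, Z i})%type.

Definition joint (p : {dffun forall i : 'I_M, X i} -> S -> R)
  (q : forall k : 'I_M, X k -> Z k -> R) (w : Omega) : R :=
  p w.1.1 w.1.2 * \big[Rmult/1]_(k : 'I_M) q k (w.1.1 k) (w.2 k).

(* X_A and Z_A: the coordinates in A (coordinates outside A are masked) *)
Definition X_ (A : {set 'I_M}) (w : Omega) : {dffun forall i : 'I_M, option (X i)} :=
  @finfun _ (fun i => option (X i)) (fun i => if i \in A then Some (w.1.1 i) else None).
Definition Z_ (A : {set 'I_M}) (w : Omega) : {dffun forall i : 'I_M, option (Z i)} :=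
  @finfun _ (fun i => option (Z i)) (fun i => if i \in A then Some (w.2 i) else None).
Definition S_ (w : Omega) : S := w.1.2.

End Model.

Definition Bstar (M : nat) (X : 'I_M -> finType) (S : finType) (Z : 'I_M -> finType)
  (P : Omega X S Z -> R) (Rt : 'I_M -> R) : Prop :=
  forall I : {set 'I_M}, I != set0 ->
    cmi P (X_ I) (Z_ I) (fun w => (Z_ (~: I) w, S_ w)) <= rsum (fun i => i \in I) Rt.

Definition nondegenerate (M : nat) (X : 'I_M -> finType) (S : finType) (Z : 'I_M -> finType)
  (P : Omega X S Z -> R) : Prop :=
  forall I I' : {set 'I_M}, I != set0 -> I' != set0 -> [disjoint I & I'] ->
    0 < cmi P (Z_ I) (Z_ I') (fun w => (Z_ (~: (I :|: I')) w, S_ w)).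

Definition extreme_point (M : nat) (C : ('I_M -> R) -> Prop) (r : 'I_M -> R) : Prop :=
  C r /\ forall (a b : 'I_M -> R) (t : R), C a -> C b -> 0 < t < 1 ->
    (forall i, r i = t * a i + (1 - t) * b i) -> forall i, a i = b i.

(* Main.v *)
From HB Require Import structures.
Require Import Defs.
From Stdlib Require Import Reals Lra Classical.
From mathcomp Require Import all_boot all_fingroup.
Set Warnings "-notation-overridden -redundant-canonical-projection".
Set Implicit Arguments. Unset Strict Implicit.
Local Open Scope R_scope.

Lemma RplusA' : associative Rplus. Proof. move=> x y z; ring. Qed.
Lemma RmultA' : associative Rmult. Proof. move=> x y z; ring. Qed.
HB.instance Definition _ := Monoid.isComLaw.Build R 0 Rplus RplusA' Rplus_comm Rplus_0_l.
HB.instance Definition _ := Monoid.isComLaw.Build R 1 Rmult RmultA' Rmult_comm Rmult_1_l.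
HB.instance Definition _ := Monoid.isMulLaw.Build R 0 Rmult Rmult_0_l Rmult_0_r.
HB.instance Definition _ := Monoid.isAddLaw.Build R Rmult Rplus Rmult_plus_distr_r Rmult_plus_distr_l.
Lemma eps_exists (T : finType) (g : T -> R) :
  (forall x, 0 < g x) -> exists e, 0 < e /\ forall x, e <= g x.
Proof.
move=> gpos.
have H : forall l : seq T, exists e, 0 < e /\ forall x, x \in l -> e <= g x.
  elim=> [|a l [e [e0 He]]]; first by exists 1; split; [lra|].
  exists (Rmin e (g a)); split; first by apply: Rmin_pos => //.
  move=> x; rewrite in_cons => /orP [/eqP -> | xl]; first exact: Rmin_r.
  apply: Rle_trans (Rmin_l _ _) (He _ xl).
have [e [e0 He]] := H (enum T).
by exists e; split=> // x; apply: He; rewrite mem_enum.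
Qed.

Section Poly.
Variables (M : nat) (f : {set 'I_M} -> R).
Hypothesis f0 : f set0 = 0.
Hypothesis fsup : forall A B, f A + f B <= f (A :|: B) + f (A :&: B).

Definition rs (r : 'I_M -> R) (A : {set 'I_M}) := \big[Rplus/0]_(i in A) r i.
Definition Cf (r : 'I_M -> R) : Prop := forall I : {set 'I_M}, I != set0 -> f I <= rs r I.

Lemma rs_split r A B : rs r A = rs r (A :&: B) + rs r (A :\: B).
Proof.
rewrite /rs (bigID (fun i => i \in B)) /=; congr (_ + _); apply: eq_bigl => i;
by rewrite !inE // andbC.
Qed.

Lemma rs_mod r A B : rs r (A :|: B) + rs r (A :&: B) = rs r A + rs r B.
Proof.
rewrite (rs_split r (A :|: B) B) (rs_split r A B).
have -> : (A :|: B) :&: B = B by apply/setP=> i; rewrite !inE; case: (i \in A); case: (i \in B).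
have -> : (A :|: B) :\: B = A :\: B by apply/setP=> i; rewrite !inE; case: (i \in A); case: (i \in B).
ring.
Qed.

Lemma rs0 r : rs r set0 = 0.
Proof. by rewrite /rs big_set0. Qed.

Lemma rs_lin r d e A : rs (fun i => r i + e * d i) A = rs r A + e * rs d A.
Proof. by rewrite /rs big_split /= big_distrr. Qed.

Lemma rs_unit i A : rs (fun k => if k == i then 1 else 0) A = if i \in A then 1 else 0.
Proof.
rewrite /rs; case: ifP => iA.
  rewrite (bigD1 i) //= eqxx big1 ?Rplus_0_r // => k /andP [_ /negbTE ->] //.
by rewrite big1 // => k kA; case: eqP => // ki; rewrite -ki kA in iA.
Qed.

Variable r : 'I_M -> R.

Definition tight T := f T = rs r T.
Definition tightb T : bool := if Req_EM_T (f T) (rs r T) then true else false.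
Lemma tightbP T : reflect (tight T) (tightb T).
Proof. by rewrite /tightb; case: Req_EM_T => h; constructor. Qed.

Hypothesis Cr : Cf r.

Lemma feas I : f I <= rs r I.
Proof.
case: (eqVneq I set0) => [->|h]; last exact: Cr.
by rewrite f0 rs0; lra.
Qed.

Lemma tightU A B : tight A -> tight B -> tight (A :|: B).
Proof.
rewrite /tight => hA hB; have := fsup A B; have := rs_mod r A B.
have := feas (A :|: B); have := feas (A :&: B); lra.
Qed.

Lemma tightI A B : tight A -> tight B -> tight (A :&: B).
Proof.
rewrite /tight => hA hB; have := fsup A B; have := rs_mod r A B.
have := feas (A :|: B); have := feas (A :&: B); lra.
Qed.

Lemma tight0 : tight set0.
Proof. by rewrite /tight f0 rs0. Qed.

Hypothesis ext : extreme_point Cf r.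

Lemma perturb (d : 'I_M -> R) : (forall T, tight T -> rs d T = 0) -> forall i, d i = 0.
Proof.
move=> dT.
pose g T := if tightb T then 1 else (rs r T - f T) / (1 + Rabs (rs d T)).
have gpos : forall T, 0 < g T.
  move=> T; rewrite /g; case: tightbP => h; first lra.
  have := feas T => hf.
  apply: Rdiv_lt_0_compat; first by rewrite /tight in h; lra.
  have := Rabs_pos (rs d T); lra.
have [e [e0 He]] := eps_exists gpos.
have key : forall s, s = 1 \/ s = -1 -> Cf (fun i => r i + (s * e) * d i).
  move=> s hs I _; rewrite rs_lin.
  case: (tightbP I) => h.
    rewrite dT // Rmult_0_r Rplus_0_r; exact: feas.
  have := He I; rewrite /g; case: tightbP => // _ hg.
  have hpos : 0 < 1 + Rabs (rs d I) by have := Rabs_pos (rs d I); lra.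
  have h1 : e * (1 + Rabs (rs d I)) <= rs r I - f I.
    apply (Rmult_le_compat_r (1 + Rabs (rs d I))) in hg; last lra.
    by rewrite /Rdiv Rmult_assoc Rinv_l ?Rmult_1_r in hg; lra.
  have h2 : - Rabs (rs d I) <= s * rs d I.
    case: hs => ->; have := Rle_abs (rs d I); have := Rabs_Ropp (rs d I); have := Rle_abs (- rs d I); lra.
  have h3 : 0 <= Rabs (rs d I) := Rabs_pos _.
  have : e * (- Rabs (rs d I)) <= e * (s * rs d I) by apply: Rmult_le_compat_l; lra.
  nra.
case: ext => _ hext.
have := hext _ _ (1/2) (key 1 (or_introl erefl)) (key (-1) (or_intror erefl)).
move=> H i; have := H ltac:(lra) ltac:(move=> j; field) i; nra.
Qed.

Lemma cover i : exists T, tight T /\ i \in T.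
Proof.
apply: NNPP => hn.
suff : (fun k : 'I_M => if k == i then 1 else 0) i = 0 by rewrite /= eqxx; lra.
apply: (perturb (d := fun k : 'I_M => if k == i then 1 else 0)) => T hT; rewrite rs_unit; case: ifP => // iT.
by case: hn; exists T.
Qed.

Lemma separate i j : (forall T, tight T -> (i \in T) = (j \in T)) -> i = j.
Proof.
move=> h; apply: NNPP => ne.
pose d k := (if k == i then 1 else 0) + (-1) * (if k == j then 1 else 0).
suff : d i = 0.
  rewrite /d eqxx; case: eqP => [e|_]; [by case: ne | lra].
apply: (perturb (d:=d)) => T hT; rewrite /d rs_lin !rs_unit (h T hT); case: (j \in T); ring.
Qed.

Lemma tightT : tight setT.
Proof.
have -> : setT = \bigcup_(T | tightb T) T.
  apply/setP=> i; rewrite inE; apply/esym/bigcupP.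
  by have [T [hT iT]] := cover i; exists T => //; apply/tightbP.
apply: (big_ind tight) => //; [exact: tight0 | exact: tightU | by move=> T /tightbP].
Qed.

Definition D i := \bigcap_(T | tightb T && (i \in T)) T.

Lemma Dtight i : tight (D i).
Proof.
apply: (big_ind tight) => //; [exact: tightT | exact: tightI | by move=> T /andP [/tightbP]].
Qed.

Lemma DP i j : reflect (forall T, tight T -> i \in T -> j \in T) (j \in D i).
Proof.
apply: (iffP bigcapP) => h T.
  by move=> hT iT; apply: h; rewrite iT andbT; apply/tightbP.
by case/andP=> /tightbP hT iT; apply: h.
Qed.

Lemma Drefl i : i \in D i.
Proof. by apply/DP. Qed.

Lemma Dtrans i j k : j \in D i -> k \in D j -> k \in D i.
Proof. by move=> /DP h1 /DP h2; apply/DP => T hT iT; apply: h2 => //; apply: h1. Qed.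

Lemma Dantisym i j : j \in D i -> i \in D j -> i = j.
Proof.
move=> /DP h1 /DP h2; apply: separate => T hT.
by apply/idP/idP; [apply: h1 | apply: h2].
Qed.

Lemma down_tight (Pset : {set 'I_M}) :
  (forall i j, i \in Pset -> j \in D i -> j \in Pset) -> tight Pset.
Proof.
move=> hd.
have -> : Pset = \bigcup_(i in Pset) D i.
  apply/setP=> j; apply/idP/bigcupP.
    by move=> jP; exists j => //; apply: Drefl.
  by case=> i iP jD; apply: hd jD.
apply: (big_ind tight) => //; [exact: tight0 | exact: tightU | by move=> i _; apply: Dtight].
Qed.

Definition h i := #|D i|.
Definition kap (i : 'I_M) := (h i * M + i)%N.

Lemma h_lt i j : j \in D i -> j != i -> (h j < h i)%N.
Proof.
move=> ji ne; apply: proper_card; apply/properP; split.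
  by apply/subsetP => k kj; apply: Dtrans ji kj.
exists i; first exact: Drefl.
by apply/negP => ij; move: ne; rewrite (Dantisym ji ij) eqxx.
Qed.

Lemma kap_le i j : j \in D i -> (kap j <= kap i)%N.
Proof.
move=> ji; case: (eqVneq j i) => [-> //|ne].
have hl := h_lt ji ne.
have a1 : (h j * M + j < (h j).+1 * M)%N.
  by rewrite mulSn [X in (_ < X)%N]addnC ltn_add2l ltn_ord.
have a2 : ((h j).+1 * M <= h i * M)%N by rewrite leq_mul2r hl orbT.
rewrite /kap; exact: leq_trans (ltnW a1) (leq_trans a2 (leq_addr _ _)).
Qed.

Lemma kap_inj : injective kap.
Proof.
move=> i j e; apply: val_inj => /=.
have : (kap i %% M = kap j %% M)%N by rewrite e.
by rewrite /kap !modnMDl !modn_small.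
Qed.

Definition rho (i : 'I_M) := #|[set k | (kap k < kap i)%N]|.

Lemma rho_lt i : (rho i < M)%N.
Proof.
rewrite /rho; have : [set k | (kap k < kap i)%N] \proper [set: 'I_M].
  by apply/properP; split; [exact: subsetT | by exists i; rewrite ?inE ?ltnn].
by move/proper_card; rewrite cardsT card_ord.
Qed.

Lemma rho_mono i j : (kap i <= kap j)%N -> (rho i <= rho j)%N.
Proof.
move=> hij; apply: subset_leq_card; apply/subsetP => k; rewrite !inE => hk.
exact: leq_trans hk hij.
Qed.

Lemma rho_smono i j : (kap i < kap j)%N -> (rho i < rho j)%N.
Proof.
move=> hij; apply: proper_card; apply/properP; split.
  apply/subsetP => k; rewrite !inE => hk; exact: ltn_trans hk hij.
by exists i; rewrite !inE ?ltnn.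
Qed.

Definition rhoo i : 'I_M := Ordinal (rho_lt i).

Lemma rhoo_inj : injective rhoo.
Proof.
move=> i j /(congr1 val) /= e; apply: kap_inj.
case: (ltngtP (kap i) (kap j)) => // hl.
  by have := rho_smono hl; rewrite e ltnn.
by have := rho_smono hl; rewrite e ltnn.
Qed.

Definition greedy (s : {perm 'I_M}) i :=
  f [set j | (s j <= s i)%N] - f [set j | (s j < s i)%N].

Lemma poly_main : exists s : {perm 'I_M}, forall i, r i = greedy s i.
Proof.
exists (perm rhoo_inj) => i; rewrite /greedy.
have sD : forall a b, b \in D a -> (perm rhoo_inj b <= perm rhoo_inj a)%N.
  by move=> a b ba; rewrite !permE /=; apply: rho_mono; apply: kap_le.
have t1 : tight [set j | (perm rhoo_inj j <= perm rhoo_inj i)%N].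
  apply: down_tight => a b; rewrite !inE => ha hb; exact: leq_trans (sD _ _ hb) ha.
have t2 : tight [set j | (perm rhoo_inj j < perm rhoo_inj i)%N].
  apply: down_tight => a b; rewrite !inE => ha hb; exact: leq_ltn_trans (sD _ _ hb) ha.
rewrite t1 t2 (rs_split r _ [set j | (perm rhoo_inj j < perm rhoo_inj i)%N]).
have -> : [set j | (perm rhoo_inj j <= perm rhoo_inj i)%N] :&: [set j | (perm rhoo_inj j < perm rhoo_inj i)%N]
   = [set j | (perm rhoo_inj j < perm rhoo_inj i)%N].
  by apply/setP=> j; rewrite !inE; apply/andP/idP => [[]//|h']; split=> //; apply: ltnW.
have -> : [set j | (perm rhoo_inj j <= perm rhoo_inj i)%N] :\: [set j | (perm rhoo_inj j < perm rhoo_inj i)%N]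
   = [set i].
  apply/setP=> j; rewrite !inE -leqNgt; apply/andP/eqP => [[h1 h2]|->]; last by rewrite leqnn.
  apply: (perm_inj (s := perm rhoo_inj)); apply: val_inj; apply/eqP; rewrite eqn_leq h1 h2 //.
by rewrite /rs big_set1; ring.
Qed.

End Poly.
Lemma big_Rle (I : finType) (A : pred I) (F G : I -> R) :
  (forall i, A i -> F i <= G i) -> \big[Rplus/0]_(i | A i) F i <= \big[Rplus/0]_(i | A i) G i.
Proof.
move=> h; apply: (big_ind2 (fun x y => x <= y)) => //; first lra.
by move=> *; apply: Rplus_le_compat.
Qed.

Lemma big_Rge0 (I : finType) (A : pred I) (F : I -> R) :
  (forall i, A i -> 0 <= F i) -> 0 <= \big[Rplus/0]_(i | A i) F i.
Proof.
move=> h; apply: (big_ind (fun x => 0 <= x)) => //; first lra.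
by move=> *; lra.
Qed.

Lemma Rinv_ge0 x : 0 <= x -> 0 <= / x.
Proof.
move=> h; case: (Req_dec x 0) => [->|ne]; first by rewrite Rinv_0; lra.
by apply: Rlt_le; apply: Rinv_0_lt_compat; lra.
Qed.

Lemma ln_le_sub1 y : 0 < y -> ln y <= y - 1.
Proof. move=> h; have := exp_ineq1_le (ln y); rewrite exp_ln //; lra. Qed.

Lemma sum_prod3 (I J : finType) (a : I -> R) (b : J -> R) c :
  \big[Rplus/0]_i \big[Rplus/0]_j (a i * b j * c) = (\big[Rplus/0]_i a i) * (\big[Rplus/0]_j b j) * c.
Proof.
rewrite Rmult_assoc big_distrl /=; apply: eq_bigr => i _.
rewrite big_distrl big_distrr /=; apply: eq_bigr => j _; ring.
Qed.

Section Info.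
Variables (Om : finType) (P : Om -> R).
Hypothesis P0 : forall w, 0 <= P w.

Definition mm (T : finType) (g : Om -> T) (w : Om) : R :=
  \big[Rplus/0]_(w' | g w' == g w) P w'.
Definition LL (T : finType) (g : Om -> T) : R :=
  \big[Rplus/0]_(w : Om) (P w * ln (mm g w)).

Lemma entropyE (T : finType) (g : Om -> T) : entropy P g = - LL g.
Proof.
rewrite /entropy /LL /rsum /dist; congr Ropp.
rewrite (partition_big g predT) //=; apply: eq_bigr => t _.
rewrite /Defs.dist /rsum big_distrl /=; apply: eq_bigr => w /eqP e.
by rewrite /mm e.
Qed.

Lemma sub_sum (A B : pred Om) :
  (forall w, A w -> B w) -> \big[Rplus/0]_(w | A w) P w <= \big[Rplus/0]_(w | B w) P w.
Proof.
move=> hAB; rewrite [X in _ <= X](bigID A) /=.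
have -> : \big[Rplus/0]_(w | B w && A w) P w = \big[Rplus/0]_(w | A w) P w.
  by apply: eq_bigl => w; case Aw: (A w); rewrite ?andbT ?andbF // hAB.
have := big_Rge0 (A := fun w => B w && ~~ A w) (fun w _ => P0 w); lra.
Qed.

Lemma mm_ge (T : finType) (g : Om -> T) w : P w <= mm g w.
Proof.
rewrite /mm (bigD1 w) //=; have := big_Rge0 (A := fun w' => (g w' == g w) && (w' != w)) (fun w _ => P0 w).
lra.
Qed.

Lemma mm_eq (T : finType) (g : Om -> T) w w' : g w = g w' -> mm g w = mm g w'.
Proof. by rewrite /mm => ->. Qed.

Lemma LL_ext (T1 T2 : finType) (g1 : Om -> T1) (g2 : Om -> T2) :
  (forall w w', (g1 w' == g1 w) = (g2 w' == g2 w)) -> LL g1 = LL g2.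
Proof.
move=> h; rewrite /LL; apply: eq_bigr => w _; congr (_ * ln _).
by apply: eq_bigl => w'; rewrite h.
Qed.

Section Submod.
Variables (T1 T2 T3 T4 : finType) (g1 : Om -> T1) (g2 : Om -> T2) (g3 : Om -> T3) (g4 : Om -> T4).
Hypothesis H13 : forall a b, g1 a = g1 b -> g3 a = g3 b.
Hypothesis H23 : forall a b, g2 a = g2 b -> g3 a = g3 b.
Hypothesis H4 : forall a b, g1 a = g1 b -> g2 a = g2 b -> g4 a = g4 b.

Let Tw w := P w * (mm g1 w * mm g2 w / (mm g3 w * mm g4 w)).

Lemma step1 w : P w * ln (mm g1 w) + P w * ln (mm g2 w) + P w <=
   P w * ln (mm g3 w) + P w * ln (mm g4 w) + Tw w.
Proof.
rewrite /Tw; case: (Req_dec (P w) 0) => [->|ne]; first lra.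
have pw : 0 < P w by have := P0 w; lra.
have m1 := mm_ge g1 w; have m2 := mm_ge g2 w; have m3 := mm_ge g3 w; have m4 := mm_ge g4 w.
have hy : 0 < mm g1 w * mm g2 w / (mm g3 w * mm g4 w).
  apply: Rdiv_lt_0_compat; apply: Rmult_lt_0_compat; lra.
have := ln_le_sub1 hy.
rewrite /Rdiv ln_mult ?ln_Rinv ?ln_mult; try (apply: Rmult_lt_0_compat); try lra.
  2: by apply: Rinv_0_lt_compat; apply: Rmult_lt_0_compat; lra.
move=> hl; have := Rmult_le_compat_l (P w) _ _ (Rlt_le _ _ pw) hl.
nra.
Qed.

Lemma claim u v :
  \big[Rplus/0]_w ((if g1 w == g1 u then P u else 0) * (if g2 w == g2 v then P v else 0)
     * (P w / (mm g3 w * mm g4 w)))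
  <= P u * P v * (if g3 v == g3 u then / mm g3 u else 0).
Proof.
have -> : \big[Rplus/0]_w ((if g1 w == g1 u then P u else 0) * (if g2 w == g2 v then P v else 0)
     * (P w / (mm g3 w * mm g4 w)))
   = P u * P v * \big[Rplus/0]_(w | (g1 w == g1 u) && (g2 w == g2 v)) (P w / (mm g3 w * mm g4 w)).
  rewrite big_distrr [RHS]big_mkcond /=; apply: eq_bigr => w _.
  by case: (g1 w == g1 u); case: (g2 w == g2 v) => /=; ring.
have puv : 0 <= P u * P v by apply: Rmult_le_pos.
case: (classic (exists w0, (g1 w0 == g1 u) && (g2 w0 == g2 v) /\ 0 < P w0)) => [[w0 [/andP [/eqP e1 /eqP e2] p0]]|hn].
  have e3 : g3 v = g3 u by rewrite -(H23 e2) (H13 e1).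
  rewrite e3 eqxx; apply: Rmult_le_compat_l => //.
  have m3 : mm g3 u = mm g3 w0 by apply: mm_eq; rewrite (H13 e1).
  have m3p : 0 < mm g3 u by rewrite m3; have := mm_ge g3 w0; lra.
  have m4p : 0 < mm g4 w0 by have := mm_ge g4 w0; lra.
  have -> : \big[Rplus/0]_(w | (g1 w == g1 u) && (g2 w == g2 v)) (P w / (mm g3 w * mm g4 w))
     = \big[Rplus/0]_(w | (g1 w == g1 u) && (g2 w == g2 v)) P w * / (mm g3 u * mm g4 w0).
    rewrite big_distrl /=; apply: eq_bigr => w /andP [/eqP f1 /eqP f2].
    rewrite (mm_eq (g := g3) (H13 (etrans f1 (esym e1)))) -m3.
    by rewrite (mm_eq (g := g4) (H4 (etrans f1 (esym e1)) (etrans f2 (esym e2)))).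
  have hs : \big[Rplus/0]_(w | (g1 w == g1 u) && (g2 w == g2 v)) P w <= mm g4 w0.
    apply: sub_sum => w /andP [/eqP f1 /eqP f2]; apply/eqP.
    exact: (H4 (etrans f1 (esym e1)) (etrans f2 (esym e2))).
  rewrite Rinv_mult; apply: Rle_trans (Rmult_le_compat_r _ _ _ _ hs) _.
    apply: Rmult_le_pos; apply: Rlt_le; apply: Rinv_0_lt_compat; lra.
  rewrite -Rmult_assoc (Rmult_comm (mm g4 w0)) Rmult_assoc Rinv_r; lra.
have -> : \big[Rplus/0]_(w | (g1 w == g1 u) && (g2 w == g2 v)) (P w / (mm g3 w * mm g4 w)) = 0.
  apply: big1 => w hw; have : P w = 0.
    case: (Req_dec (P w) 0) => // ne; case: hn; exists w; split=> //; have := P0 w; lra.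
  by move=> ->; rewrite /Rdiv Rmult_0_l.
rewrite Rmult_0_r; apply: Rmult_le_pos => //.
case: eqP => _; last lra.
apply: Rinv_ge0; apply: big_Rge0 => w _; exact: P0.
Qed.

Lemma step2 : \big[Rplus/0]_w Tw w <= \big[Rplus/0]_w P w.
Proof.
have -> : \big[Rplus/0]_w Tw w = \big[Rplus/0]_u \big[Rplus/0]_v \big[Rplus/0]_w
   ((if g1 w == g1 u then P u else 0) * (if g2 w == g2 v then P v else 0)
     * (P w / (mm g3 w * mm g4 w))).
  rewrite [RHS](eq_bigr (fun u => \big[Rplus/0]_w \big[Rplus/0]_v
     ((if g1 w == g1 u then P u else 0) * (if g2 w == g2 v then P v else 0)
     * (P w / (mm g3 w * mm g4 w))))); last by move=> u _; rewrite exchange_big.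
  rewrite [RHS]exchange_big /=; apply: eq_bigr => w _.
  rewrite (sum_prod3 (fun u => if g1 w == g1 u then P u else 0) (fun v => if g2 w == g2 v then P v else 0)).
  have e1 : \big[Rplus/0]_(w' | g1 w' == g1 w) P w' = \big[Rplus/0]_u (if g1 w == g1 u then P u else 0).
    by rewrite big_mkcond; apply: eq_bigr => u _; rewrite eq_sym.
  have e2 : \big[Rplus/0]_(w' | g2 w' == g2 w) P w' = \big[Rplus/0]_u (if g2 w == g2 u then P u else 0).
    by rewrite big_mkcond; apply: eq_bigr => u _; rewrite eq_sym.
  rewrite /Tw /mm e1 e2 /Rdiv; ring.
apply: Rle_trans (_ : _ <= \big[Rplus/0]_u \big[Rplus/0]_v (P u * P v * (if g3 v == g3 u then / mm g3 u else 0))) _.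
  by apply: big_Rle => u _; apply: big_Rle => v _; apply: claim.
apply: big_Rle => u _.
have -> : \big[Rplus/0]_v (P u * P v * (if g3 v == g3 u then / mm g3 u else 0)) =
   P u * / mm g3 u * mm g3 u.
  rewrite [X in _ = _ * X]/mm [X in _ = _ * X]big_mkcond big_distrr /=; apply: eq_bigr => v _.
  case: (g3 v == g3 u); ring.
case: (Req_dec (P u) 0) => [->|ne]; first lra.
have : 0 < mm g3 u by have := mm_ge g3 u; have := P0 u; lra.
move=> h; rewrite Rmult_assoc Rinv_l; lra.
Qed.

Lemma submod : LL g1 + LL g2 <= LL g3 + LL g4.
Proof.
have h := big_Rle (A := predT) (fun w _ => step1 w).
rewrite !big_split /= in h; have := step2.
rewrite /LL; lra.
Qed.

End Submod.
End Info.
Lemma sumprod (M : nat) (Z : 'I_M -> finType) (g : forall k, Z k -> R) :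
  (forall k, \big[Rplus/0]_(c : Z k) g k c = 1) ->
  forall (K : {set 'I_M}) (z0 : {dffun forall i, Z i}),
  \big[Rplus/0]_(z' : {dffun forall i, Z i} | [forall k, (k \notin K) ==> (z' k == z0 k)])
     \big[Rmult/1]_k g k (z' k) = \big[Rmult/1]_(k | k \notin K) g k (z0 k).
Proof.
move=> gs K; move Hn : #|K| => n; elim: n K Hn => [|n IH] K Hn z0.
  have -> : K = set0 by apply/eqP; rewrite -cards_eq0 Hn.
  rewrite (big_pred1 z0); last first.
    move=> z' /=; apply/forallP/eqP => [h|->]; last by move=> k; rewrite eqxx implybT.
    by apply/ffunP => k; have := h k; rewrite in_set0 /= => /eqP.
  by apply: eq_bigl => k; rewrite in_set0.
have [j jK] : exists j, j \in K.
  by apply/set0Pn; rewrite -cards_eq0 Hn.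
have HK' : #|K :\ j| = n by move: Hn; rewrite (cardsD1 j K) jK add1n => -[].
rewrite (partition_big (fun z' : {dffun forall i, Z i} => z' j) predT) //=.
have H : forall c : Z j,
   \big[Rplus/0]_(z' : {dffun forall i, Z i} | [forall k, (k \notin K) ==> (z' k == z0 k)] && (z' j == c))
     \big[Rmult/1]_k g k (z' k)
   = g j c * \big[Rmult/1]_(k | k \notin K) g k (z0 k).
  move=> c; pose z1 : {dffun forall i, Z i} := finfun (dfwith (fun k => z0 k) c).
  rewrite (eq_bigl (fun z' : {dffun forall i, Z i} => [forall k, (k \notin K :\ j) ==> (z' k == z1 k)])).
    rewrite IH // (bigD1 j) /=; last by rewrite !inE eqxx.
    rewrite /z1 ffunE dfwith_in; congr (_ * _).
    apply: eq_big => k; first by rewrite !inE; case: (eqVneq k j) => [->|]; rewrite ?jK //=; case: (k \in K).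
    move=> /andP [_ kj]; rewrite ffunE dfwith_out //; by rewrite eq_sym.
  move=> z' /=; apply/andP/forallP => [[/forallP h /eqP hj] k|h].
    rewrite !inE /z1 ffunE; case: (eqVneq k j) => [e|ne] /=.
      by subst k; rewrite dfwith_in hj eqxx.
    by rewrite dfwith_out; [apply: h | rewrite eq_sym].
  split.
    apply/forallP => k; apply/implyP => kK; have := h k; rewrite !inE /z1 ffunE.
    case: (eqVneq k j) => [e|ne] /=; first by subst k; rewrite jK in kK.
    by rewrite kK dfwith_out // eq_sym.
  by have := h j; rewrite !inE eqxx /z1 ffunE dfwith_in.
by rewrite (eq_bigr _ (fun c _ => H c)) -big_distrl /= gs Rmult_1_l.
Qed.

Lemma prod_ge0 (I : finType) (A : pred I) (F : I -> R) :
  (forall i, A i -> 0 <= F i) -> 0 <= \big[Rmult/1]_(i | A i) F i.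
Proof.
move=> h; apply: (big_ind (fun x => 0 <= x)) => //; first lra.
by move=> *; apply: Rmult_le_pos.
Qed.

Lemma prod_pos_each (I : finType) (F : I -> R) :
  (forall i, 0 <= F i) -> 0 < \big[Rmult/1]_i F i -> forall i, 0 < F i.
Proof.
move=> h hp i; case: (Req_dec (F i) 0) => [e|ne]; last by have := h i; lra.
by move: hp; rewrite (bigD1 i) //= e Rmult_0_l; lra.
Qed.

Lemma ln_prod (I : finType) (A : pred I) (F : I -> R) :
  (forall i, A i -> 0 < F i) ->
  ln (\big[Rmult/1]_(i | A i) F i) = \big[Rplus/0]_(i | A i) ln (F i).
Proof.
move=> h.
suff : 0 < \big[Rmult/1]_(i | A i) F i /\ ln (\big[Rmult/1]_(i | A i) F i) = \big[Rplus/0]_(i | A i) ln (F i) by case.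
apply: (big_ind2 (fun x y => 0 < x /\ ln x = y)).
- by split; [lra | exact: ln_1].
- move=> x1 y1 x2 y2 [p1 e1] [p2 e2]; split; first exact: Rmult_lt_0_compat.
  by rewrite ln_mult // e1 e2.
- by move=> i Ai; split; [exact: h|].
Qed.

Unset Implicit Arguments.
Section Model.
Variables (M : nat) (X : 'I_M -> finType) (S : finType) (Z : 'I_M -> finType)
  (p : {dffun forall i : 'I_M, X i} -> S -> R)
  (q : forall k : 'I_M, X k -> Z k -> R).
Hypothesis p_nonneg : forall x s, (0 <= p x s).
Hypothesis q_nonneg : forall k x z, (0 <= q k x z).
Hypothesis q_sum1 : forall k x, rsum predT (fun z => q k x z) = 1.

Notation Om := (Omega X S Z).
Notation P := (joint p q).

Lemma P0 : forall w : Om, 0 <= P w.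
Proof.
move=> w; rewrite /joint; apply: Rmult_le_pos => //; apply: prod_ge0 => *; exact: q_nonneg.
Qed.

Definition zs (K : {set 'I_M}) (w : Om) := (Z_ K w, S_ w).
Definition xzs (I K : {set 'I_M}) (w : Om) := (X_ I w, zs K w).

Lemma Z_eqE K (w w' : Om) :
  (Z_ K w' == Z_ K w) = [forall k, (k \in K) ==> (w'.2 k == w.2 k)].
Proof.
apply/eqP/forallP => [e k|h].
  have := congr1 (fun g : {dffun forall i : 'I_M, option (Z i)} => g k) e; rewrite /= !ffunE; case: (k \in K) => //= -[->].
  by rewrite eqxx.
apply/ffunP => k; rewrite !ffunE; case: ifP => // kK.
by have := h k; rewrite kK => /eqP ->.
Qed.

Lemma X_eqE K (w w' : Om) :
  (X_ K w' == X_ K w) = [forall k, (k \in K) ==> (w'.1.1 k == w.1.1 k)].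
Proof.
apply/eqP/forallP => [e k|h].
  have := congr1 (fun g : {dffun forall i : 'I_M, option (X i)} => g k) e; rewrite /= !ffunE; case: (k \in K) => //= -[->].
  by rewrite eqxx.
apply/ffunP => k; rewrite !ffunE; case: ifP => // kK.
by have := h k; rewrite kK => /eqP ->.
Qed.

Lemma Z_eq K (w w' : Om) :
  Z_ K w = Z_ K w' <-> (forall k, k \in K -> w.2 k = w'.2 k).
Proof.
split => [e k kK|h].
  have : Z_ K w' == Z_ K w by rewrite e eqxx.
  by rewrite Z_eqE => /forallP/(_ k); rewrite kK => /eqP ->.
apply/eqP; rewrite Z_eqE; apply/forallP => k; apply/implyP => kK; rewrite (h k kK) //.
Qed.

Lemma forall_split (I : {set 'I_M}) (a : 'I_M -> bool) :
  [forall k, (k \in I) ==> a k] && [forall k, (k \in ~: I) ==> a k] = [forall k, a k].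
Proof.
apply/andP/forallP => [[/forallP h1 /forallP h2] k|h].
  by have := h1 k; have := h2 k; rewrite inE; case: (k \in I).
by split; apply/forallP => k; rewrite h implybT.
Qed.

Lemma BC_ext I : LL P (fun w => (Z_ I w, (Z_ (~: I) w, S_ w))) = LL P (zs setT).
Proof.
apply: LL_ext => w w'; rewrite /zs !xpair_eqE !Z_eqE andbA forall_split.
by congr (_ && _); apply: eq_forallb => k; rewrite inE.
Qed.

Lemma ABC_ext I : LL P (fun w => (X_ I w, Z_ I w, (Z_ (~: I) w, S_ w))) = LL P (xzs I setT).
Proof.
apply: LL_ext => w w'; rewrite /xzs /zs !xpair_eqE !Z_eqE -!andbA.
congr (_ && _); rewrite andbA forall_split.
by congr (_ && _); apply: eq_forallb => k; rewrite inE.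
Qed.

Definition aa i := \big[Rplus/0]_(w : Om) (P w * ln (q i (w.1.1 i) (w.2 i))).

Definition cx (I : {set 'I_M}) (w : Om) (xs : {dffun forall i : 'I_M, X i} * S) :=
  [forall i, (i \in I) ==> (xs.1 i == w.1.1 i)] && (xs.2 == w.1.2).

Lemma mm_xzs I K w : mm P (xzs I K) w =
  \big[Rplus/0]_(xs | cx I w xs)
    (p xs.1 xs.2 * \big[Rplus/0]_(z' : {dffun forall i : 'I_M, Z i} | [forall k, (k \in K) ==> (z' k == w.2 k)])
        \big[Rmult/1]_k q k (xs.1 k) (z' k)).
Proof.
rewrite (eq_bigr (fun xs => \big[Rplus/0]_(z' : {dffun forall i : 'I_M, Z i} | [forall k, (k \in K) ==> (z' k == w.2 k)])
   (p xs.1 xs.2 * \big[Rmult/1]_k q k (xs.1 k) (z' k)))); last by move=> xs _; rewrite big_distrr.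
rewrite pair_big_dep /mm; apply: eq_bigl => -[[x s] z] /=.
rewrite /xzs /zs !xpair_eqE X_eqE Z_eqE /cx /S_ /=.
by rewrite -andbA [X in _ && X]andbC andbA.
Qed.

Lemma mm_T I w : mm P (xzs I setT) w =
  \big[Rplus/0]_(xs | cx I w xs) (p xs.1 xs.2 * \big[Rmult/1]_k q k (xs.1 k) (w.2 k)).
Proof.
rewrite mm_xzs; apply: eq_bigr => xs _; congr (_ * _).
rewrite (big_pred1 w.2) // => z' /=; apply/forallP/eqP => [h|->]; last by move=> k; rewrite eqxx implybT.
by apply/ffunP => k; have := h k; rewrite in_setT /= => /eqP.
Qed.

Lemma mm_cI I w : mm P (xzs I (~: I)) w =
  \big[Rplus/0]_(xs | cx I w xs) (p xs.1 xs.2 * \big[Rmult/1]_(k | k \notin I) q k (xs.1 k) (w.2 k)).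
Proof.
rewrite mm_xzs; apply: eq_bigr => xs _; congr (_ * _).
rewrite -(sumprod (g := fun k c => q k (xs.1 k) c)); last first.
  by move=> k; have := q_sum1 k (xs.1 k); rewrite /rsum.
by apply: eq_bigl => z'; apply: eq_forallb => k; rewrite inE.
Qed.

Lemma markov I w : mm P (xzs I setT) w =
  \big[Rmult/1]_(i in I) q i (w.1.1 i) (w.2 i) * mm P (xzs I (~: I)) w.
Proof.
rewrite mm_T mm_cI big_distrr; apply: eq_bigr => xs /andP [/forallP hx _].
rewrite (bigID (fun k => k \in I)) /=.
have -> : \big[Rmult/1]_(k | k \in I) q k (xs.1 k) (w.2 k) = \big[Rmult/1]_(i in I) q i (w.1.1 i) (w.2 i).
  by apply: eq_bigr => k kI; have := hx k; rewrite kI => /eqP ->.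
by rewrite -!Rmult_assoc (Rmult_comm (p xs.1 xs.2)).
Qed.

Lemma LL_markov I : LL P (xzs I setT) = \big[Rplus/0]_(i in I) aa i + LL P (xzs I (~: I)).
Proof.
rewrite /aa exchange_big /= /LL -big_split /=; apply: eq_bigr => w _.
case: (Req_dec (P w) 0) => [->|ne].
  by rewrite big1 ?Rmult_0_l ?Rplus_0_l // => i _; rewrite Rmult_0_l.
have pw : 0 < P w by have := P0 w; lra.
have hq : forall k, 0 < q k (w.1.1 k) (w.2 k).
  apply: prod_pos_each => [k|]; first exact: q_nonneg.
  move: pw; rewrite /joint => pw.
  have h0 : 0 <= \big[Rmult/1]_k q k (w.1.1 k) (w.2 k) by apply: prod_ge0 => k _; exact: q_nonneg.
  case: (Req_dec (\big[Rmult/1]_k q k (w.1.1 k) (w.2 k)) 0) => [e|ne'].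
    by move: pw; rewrite e Rmult_0_r; lra.
  lra.
have hm : 0 < mm P (xzs I (~: I)) w by have := mm_ge P0 (xzs I (~: I)) w; lra.
have hpI : 0 < \big[Rmult/1]_(i in I) q i (w.1.1 i) (w.2 i).
  apply: (big_ind (fun x => 0 < x)) => //; [lra | move=> *; exact: Rmult_lt_0_compat].
rewrite markov ln_mult // ln_prod; last by move=> i _; apply: hq.
by rewrite Rmult_plus_distr_l big_distrr.
Qed.

Definition fF (I : {set 'I_M}) : R :=
  \big[Rplus/0]_(i in I) aa i + LL P (zs (~: I)) - LL P (zs setT).

Lemma cmiE I : cmi P (X_ I) (Z_ I) (fun w => (Z_ (~: I) w, S_ w)) = fF I.
Proof.
rewrite /cmi !entropyE BC_ext ABC_ext LL_markov /fF.
have -> : LL P (fun w => (X_ I w, (Z_ (~: I) w, S_ w))) = LL P (xzs I (~: I)) by [].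
have -> : LL P (fun w => (Z_ (~: I) w, S_ w)) = LL P (zs (~: I)) by [].
ring.
Qed.

Lemma fF0 : fF set0 = 0.
Proof. by rewrite /fF big_set0 setC0; ring. Qed.

Lemma fFsup A B : fF A + fF B <= fF (A :|: B) + fF (A :&: B).
Proof.
have hm := rs_mod aa A B; rewrite /rs in hm.
have hs := submod P0 (g1 := zs (~: A)) (g2 := zs (~: B)) (g3 := zs (~: A :&: ~: B)) (g4 := zs (~: A :|: ~: B)).
rewrite /fF setCU setCI.
suff : LL P (zs (~: A)) + LL P (zs (~: B)) <= LL P (zs (~: A :&: ~: B)) + LL P (zs (~: A :|: ~: B)) by lra.
apply: hs.
- move=> a b [/Z_eq h1 e]; rewrite /zs e; congr pair; apply/Z_eq => k; rewrite inE => /andP [k1 _]; exact: h1.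
- move=> a b [/Z_eq h1 e]; rewrite /zs e; congr pair; apply/Z_eq => k; rewrite inE => /andP [_ k1]; exact: h1.
- move=> a b [/Z_eq h1 e] [/Z_eq h2 _]; rewrite /zs e; congr pair; apply/Z_eq => k; rewrite inE => /orP [k1|k1]; [exact: h1|exact: h2].
Qed.

End Model.

Lemma ext_iff (M : nat) (C1 C2 : ('I_M -> R) -> Prop) r :
  (forall r, C1 r <-> C2 r) -> extreme_point C1 r -> extreme_point C2 r.
Proof.
move=> h [c1 e]; split; first by apply/h.
by move=> a b t ha hb; apply: e; apply/h.
Qed.

Lemma length_size (T : Type) (s : seq T) : List.length s = size s.
Proof. by elim: s => //= a s ->. Qed.

Lemma in_In (T : eqType) (x : T) (s : seq T) : x \in s -> List.In x s.
Proof.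
elim: s => //= a s IH; rewrite in_cons => /orP [/eqP ->|h]; [by left | by right; apply: IH].
Qed.

Lemma card_allperm M : #|{perm 'I_M}| = M`!.
Proof.
have := card_perm [set: 'I_M]; rewrite cardsT card_ord => <-; apply: eq_card => s.
apply/esym; apply/idP; change (perm_on [set: _] s). by apply/subsetP => x _; rewrite inE.
Qed.

Theorem lemma3 (M : nat) (X : 'I_M -> finType) (S : finType) (Z : 'I_M -> finType)
  (p : {dffun forall i : 'I_M, X i} -> S -> R)
  (q : forall k : 'I_M, X k -> Z k -> R)
  (p_nonneg : forall x s, (0 <= p x s))
  (p_sum1 : rsum predT (fun xs : {dffun forall i : 'I_M, X i} * S => p xs.1 xs.2) = 1)
  (q_nonneg : forall k x z, (0 <= q k x z))
  (q_sum1 : forall k x, rsum predT (fun z => q k x z) = 1)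
  (nondeg : nondegenerate (joint p q)) :
  exists l : list ('I_M -> R),
    (length l <= M`!)%coq_nat /\
    forall r, extreme_point (Bstar (joint p q)) r ->
      exists r', List.In r' l /\ forall i, r i = r' i.
Proof.
pose f := fF M X S Z p q.
exists (List.map (greedy f) (enum {perm 'I_M})); split.
  by rewrite List.length_map length_size -cardE card_allperm.
move=> r hr.
have hC : forall r, Bstar (joint p q) r <-> Cf f r.
  move=> r'; split => h I hI; have := h I hI; rewrite /f (cmiE M X S Z p q p_nonneg q_nonneg q_sum1) //.
have he := @ext_iff _ _ _ _ hC hr.
have [s hs] := poly_main (fF0 M X S Z p q) (fFsup M X S Z p q p_nonneg q_nonneg) he.1 he.
exists (greedy f s); split => //.
by apply: List.in_map; apply: in_In; rewrite mem_enum.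
Qed.
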